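(* Let $\mathcal{F}\subseteq\mathcal{O}$ be a normal family of objects and let $(M_p)_{p\in\mathcal{F}}$ be the Voronoi partition of $V(G)$ with respect to $\mathcal{F}$. Then for every $p\in\mathcal{F}$ and every $v\in M_p$, the unique shortest path from $v$ to $\mathrm{loc}(p)$ is entirely contained in $M_p$. In particular, $G[M_p]$ is connected.
   Context: $G$ is a connected graph with positive edge weights; $\mathrm{dist}(X,Y)$ denotes the minimum weight of a path between a vertex of $X$ and a vertex of $Y$. Each object $p\in\mathcal{O}$ has a location $\mathrm{loc}(p)$, a nonempty vertex set inducing a connected subgraph, and a radius $\mathrm{rad}(p)\ge 0$. A family $\mathcal{F}$ is normal if locations of its members are pairwise disjoint and $\mathrm{dist}(\mathrm{loc}(p_1),\mathrm{loc}(p_2))>\mathrm{rad}(p_1)-\mathrm{rad}(p_2)$ for all ordered pairs of distinct $p_1,p_2\in\mathcal{F}$. Standing assumption: all values $\mathrm{dist}(u,v)$ and $\mathrm{dist}(u,v)-\mathrm{rad}(p)$ ($u,v\in V(G)$, $p\in\mathcal{O}$) are pairwise different and shortest paths between vertices are unique. The Voronoi partition assigns $v\in V(G)$ to $M_{p_0}$ iff $\mathrm{dist}(v,\mathrm{loc}(p_0))-\mathrm{rad}(p_0)$ is the smallest among the values $\mathrm{dist}(v,\mathrm{loc}(p))-\mathrm{rad}(p)$, $p\in\mathcal{F}$. The shortest path from $v$ to $\mathrm{loc}(p)$ is the minimum-weight path from $v$ to a vertex of $\mathrm{loc}(p)$. *)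

(* Defs.v *)
From mathcomp Require Import all_boot all_order all_algebra.
From mathcomp Require Import boolp classical_sets reals.
Set Implicit Arguments. Unset Strict Implicit. Unset Printing Implicit Defensive.
Import Order.TTheory GRing.Theory Num.Theory.
Local Open Scope ring_scope.

Section Graph.
Variables (R : realType) (V : finType) (e : rel V) (w : V -> V -> R).

Fixpoint wt (u : V) (s : seq V) : R :=
  if s is x :: s' then w u x + wt x s' else 0.

Definition walk (u v : V) (s : seq V) : Prop := path e u s /\ last u s = v.

Definition weighted_connected_graph : Prop :=
  [/\ symmetric e, irreflexive e,
      (forall x y, w x y = w y x),
      (forall x y, e x y -> 0 < w x y) &
      (forall u v, exists s, walk u v s)].

Definition dist (u v : V) : R :=
  inf [set r | exists s, walk u v s /\ r = wt u s]%classic.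

Definition distS (X Y : {set V}) : R :=
  inf [set r | exists x s, [/\ x \in X, path e x s, last x s \in Y & r = wt x s]]%classic.

Definition shortest (u v : V) (s : seq V) : Prop := walk u v s /\ wt u s = dist u v.

Definition shortest_to (v : V) (X : {set V}) (s : seq V) : Prop :=
  [/\ path e v s, last v s \in X & wt v s = distS [set v] X].

(* X induces a connected subgraph (X nonempty is required separately) *)
Definition induces_connected (X : {set V}) : Prop :=
  forall x y, x \in X -> y \in X ->
    exists s, walk x y s /\ all (fun z => z \in X) s.

Variables (O : finType) (loc : O -> {set V}) (rad : O -> R).

Definition valid_objects : Prop :=
  forall p, [/\ (exists x, x \in loc p), induces_connected (loc p) & 0 <= rad p].

Definition normal (F : {set O}) : Prop :=
  forall p1 p2, p1 \in F -> p2 \in F -> p1 != p2 ->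
    [disjoint loc p1 & loc p2] /\ rad p1 - rad p2 < distS (loc p1) (loc p2).

Definition voronoi (F : {set O}) (p : O) : {set V} :=
  [set v | asbool (p \in F /\ forall q, q \in F ->
       distS [set v] (loc p) - rad p <= distS [set v] (loc q) - rad q)].

Definition generic : Prop :=
  [/\
      (forall u v u' v', u != v -> u' != v' ->
         dist u v = dist u' v' -> (u = u' /\ v = v') \/ (u = v' /\ v = u')),
      (forall u v u' v' p p', dist u v - rad p = dist u' v' - rad p' ->
         p = p' /\ ((u = v /\ u' = v') \/ (u = u' /\ v = v') \/ (u = v' /\ v = u'))),
      (forall u v u' v' p, 0 < rad p -> dist u v <> dist u' v' - rad p) &
      (forall u v s t, shortest u v s -> shortest u v t -> s = t)].

End Graph.

(* Main.v *)
Require Import Defs.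
From mathcomp Require Import all_boot all_order all_algebra.
From mathcomp Require Import boolp classical_sets reals.
From mathcomp Require Import lra.
Set Implicit Arguments. Unset Strict Implicit. Unset Printing Implicit Defensive.
Import Order.TTheory GRing.Theory Num.Theory.
Local Open Scope ring_scope.

Section H.
Variables (R : realType) (V : finType) (e : rel V) (w : V -> V -> R).
Hypothesis wpos : forall x y, e x y -> 0 < w x y.

Lemma wt_cat u s1 s2 : wt w u (s1 ++ s2) = wt w u s1 + wt w (last u s1) s2.
Proof. by elim: s1 u => [|x s IH] u /=; rewrite ?add0r // IH addrA. Qed.

Lemma wt_ge0 u s : path e u s -> 0 <= wt w u s.
Proof.
elim: s u => [|x s IH] u //= /andP[hux hp].
by rewrite addr_ge0 // ?IH // ltW // wpos.
Qed.

Definition Sset (X Y : {set V}) := [set r | exists x s, [/\ x \in X, path e x s, last x s \in Y & r = wt w x s]]%classic.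

Lemma S_lb (X Y : {set V}) : has_lbound (Sset X Y).
Proof. exists 0 => r [x [s [_ hp _ ->]]]; exact: wt_ge0. Qed.

Lemma distS_le (X Y : {set V}) x s : x \in X -> path e x s -> last x s \in Y -> distS e w X Y <= wt w x s.
Proof. move=> hx hp hl; apply: (ge_inf (S_lb X Y)); by exists x, s. Qed.

Lemma distS_ge (X Y : {set V}) m : (exists x s, [/\ x \in X, path e x s & last x s \in Y]) ->
  (forall x s, x \in X -> path e x s -> last x s \in Y -> m <= wt w x s) ->
  m <= distS e w X Y.
Proof.
move=> [x [s [hx hp hl]]] H; apply: lb_le_inf.
  by exists (wt w x s), x, s.
by move=> r [y [t [hy ht hl' ->]]]; apply: H.
Qed.

Lemma tri v x (X : {set V}) : e v x -> (exists s, path e x s /\ last x s \in X) ->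
  distS e w [set v] X <= w v x + distS e w [set x] X.
Proof.
move=> hvx [s0 [hp0 hl0]].
rewrite -lerBlDl; apply: distS_ge; first by exists x, s0; rewrite set11.
move=> y t; rewrite inE => /eqP -> hp hl.
rewrite lerBlDl; apply: (@distS_le _ _ v (x :: t)); rewrite ?set11 //=.
by rewrite hvx.
Qed.

Lemma shorten_wt s x : path e x s -> exists t, [/\ path e x t, last x t = last x s,
  uniq (x :: t) & wt w x t <= wt w x s].
Proof.
elim: s x => [|y s IH] x /=; first by move=> _; exists [::].
move=> /andP[hxy hp]; have [t [ht hl hu hw]] := IH y hp.
have hpath : path e x (y :: t) by rewrite /= hxy.
case hin: (x \in y :: t); last first.
  exists (y :: t); split => //.
    by rewrite /= in hu *; rewrite hin.
  by rewrite /= lerD2l.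
have : exists a b, y :: t = a ++ x :: b.
  by move: hin => /splitPr [a b]; exists a, b.
move=> [a [b E]].
have hl' : last x b = last y s by rewrite -hl -[last y t]/(last x (y :: t)) E last_cat.
move: hpath hu; rewrite E cat_path => /andP[pa pb] hu.
exists b; split => //.
- by move: pb => /= /andP[].
- by move: hu; rewrite cat_uniq => /and3P[_ _].
apply: le_trans (_ : w x y + wt w y t <= _); last by rewrite lerD2l.
rewrite -[w x y + _]/(wt w x (y :: t)) E wt_cat /=.
have h1 := wt_ge0 pa. have h2 : 0 < w (last x a) x by move: pb => /= /andP[/wpos].
lra.
Qed.

Fixpoint allseqs n : seq (seq V) :=
  if n is n'.+1 then [::] :: [seq x :: s | x <- enum V, s <- allseqs n'] else [:: [::]].

Lemma mem_allseqs n s : (size s <= n)%N -> s \in allseqs n.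
Proof.
elim: n s => [|n IH] [|x s] //=; try by rewrite mem_head.
move=> hs; rewrite in_cons; apply/orP; right.
by apply: (allpairs_f (fun x s => x :: s)); rewrite ?mem_enum // IH.
Qed.

Lemma argmin (l : seq (seq V)) (f : seq V -> R) t : t \in l ->
  exists2 m, m \in l & forall y, y \in l -> f m <= f y.
Proof.
elim: l t => [|a l IH] t //; rewrite in_cons => _.
case: l IH => [|b l] IH.
  by exists a; rewrite ?mem_head // => y; rewrite mem_seq1 => /eqP ->.
have [m hm H] := IH b (mem_head _ _).
case: (leP (f a) (f m)) => h.
  exists a; first exact: mem_head.
  move=> y; rewrite in_cons => /orP[/eqP -> //|/H]; exact: le_trans.
exists m; first by rewrite in_cons hm orbT.
move=> y; rewrite in_cons => /orP[/eqP -> |/H //]; exact: ltW.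
Qed.

Lemma distS_attained x (X : {set V}) : (exists s, path e x s /\ last x s \in X) ->
  exists s, [/\ path e x s, last x s \in X & wt w x s = distS e w [set x] X].
Proof.
move=> [s0 [hp0 hl0]].
pose cands := [seq t <- allseqs #|V| | path e x t && (last x t \in X)].
have incand : forall t, path e x t -> last x t \in X -> exists2 t', t' \in cands & wt w x t' <= wt w x t.
  move=> t ht hl; have [t' [ht' hl' hu hw]] := shorten_wt ht.
  exists t' => //; rewrite mem_filter ht' hl' hl /=; apply: mem_allseqs.
  have := max_card (mem (x :: t')); move/card_uniqP: hu => -> /=.
  by move=> /ltnW.
have [t1 ht1 _] := incand _ hp0 hl0.
have [m hm H] := argmin (wt w x) ht1.
move: (hm); rewrite mem_filter => /andP[/andP[hpm hlm] _].
exists m; split => //; apply: le_anti; rewrite distS_le ?set11 ?andbT //.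
apply: distS_ge; first by exists x, m; rewrite set11.
move=> y t; rewrite inE => /eqP -> ht hl.
have [t' ht' hw] := incand _ ht hl; exact: le_trans (H _ ht') hw.
Qed.

Lemma wt_rcons u s x : wt w u (rcons s x) = wt w u s + w (last u s) x.
Proof. by rewrite -cats1 wt_cat /= addr0. Qed.

Lemma rev_walk (esym : symmetric e) (wsym : forall x y, w x y = w y x) u s :
  path e u s ->
  [/\ path e (last u s) (rev (belast u s)), last (last u s) (rev (belast u s)) = u
    & wt w (last u s) (rev (belast u s)) = wt w u s].
Proof.
elim: s u => [|x s IH] u //= /andP[hux hp].
have [h1 h2 h3] := IH x hp.
rewrite rev_cons rcons_path last_rcons wt_rcons h1 h2 h3 esym hux; split => //.
by rewrite wsym addrC.
Qed.

End H.

Lemma vorP (R : realType) (V : finType) (e : rel V) (w : V -> V -> R)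
  (O : finType) (loc : O -> {set V}) (rad : O -> R) (F : {set O}) p v :
  v \in voronoi e w loc rad F p <->
  (p \in F /\ forall q, q \in F ->
       distS e w [set v] (loc p) - rad p <= distS e w [set v] (loc q) - rad q).
Proof. rewrite /voronoi inE; split => [/asboolP //|h]; exact/asboolP. Qed.

Theorem lemma4p2 (R : realType) (V : finType) (e : rel V) (w : V -> V -> R)
  (O : finType) (loc : O -> {set V}) (rad : O -> R) (F : {set O}) :
  weighted_connected_graph e w ->
  valid_objects e loc rad ->
  generic e w rad ->
  normal e w loc rad F ->
  forall p, p \in F ->
    (forall v s, v \in voronoi e w loc rad F p ->
       shortest_to e w v (loc p) s ->
       all (fun z => z \in voronoi e w loc rad F p) (v :: s)) /\
    induces_connected e (voronoi e w loc rad F p).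
Proof.
move=> [esym irr wsym wpos conn] valid _ hnorm p hp.
set M := voronoi e w loc rad F p.
have reach : forall x q, exists s, path e x s /\ last x s \in loc q.
  move=> x q; have [[a ha] _ _] := valid q; have [s [hs hl]] := conn x a.
  by exists s; rewrite hl.
have part1 : forall s v, v \in M -> shortest_to e w v (loc p) s -> all (fun z => z \in M) (v :: s).
  elim=> [|x s IH] v hv [hps hl hw]; first by rewrite /= hv.
  suff H : all (fun z => z \in M) (x :: s) by rewrite /= hv.
  move/andP: hps => [hvx hps]; rewrite /= in hl hw.
  have tp := tri wpos hvx (reach x p).
  have le1 : distS e w [set x] (loc p) <= wt w x s by apply: distS_le; rewrite ?set11.
  have eq1 : wt w x s = distS e w [set x] (loc p) by apply/eqP; rewrite eq_le le1; lra.
  apply: (IH x); last by split.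
  apply/vorP; split => // q hq.
  have tq := tri wpos hvx (reach x q).
  have := (proj2 (proj1 (vorP _ _ _ _ _ _ _) hv)) q hq; lra.
have locM : forall a, a \in loc p -> a \in M.
  move=> a ha; apply/vorP; split => // q hq.
  have h0 : distS e w [set a] (loc p) <= 0.
    by apply: (@distS_le _ _ _ w wpos _ _ a [::]); rewrite ?set11.
  have [->|hne] := eqVneq q p; first exact: le_refl.
  have [_ hlt] := hnorm q p hq hp hne.
  have : distS e w (loc q) (loc p) <= distS e w [set a] (loc q).
    have [s0 [hs0 hl0]] := reach a q.
    apply: distS_ge => //; first by exists a, s0; rewrite set11.
    move=> y t; rewrite inE => /eqP -> ht hl.
    have [r1 r2 r3] := rev_walk esym wsym ht.
    by rewrite -r3; apply: distS_le => //; rewrite r2.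
  lra.
split; first by move=> v s; exact: part1.
have sp : forall x, x \in M -> exists s, [/\ path e x s, last x s \in loc p & all (fun z => z \in M) (x :: s)].
  move=> x hx; have [s [h1 h2 h3]] := distS_attained wpos (reach x p).
  by exists s; split => //; apply: part1.
move=> x y hx hy.
have [sx [px lx ax]] := sp x hx; have [sy [py ly ay]] := sp y hy.
have [_ hcon _] := valid p.
have [t [[pt lt] at_]] := hcon _ _ lx ly.
have [r1 r2 r3] := rev_walk esym wsym py.
exists (sx ++ t ++ rev (belast y sy)); split; first split.
- by rewrite !cat_path px /= pt /= lt r1.
- by rewrite !last_cat lt r2.
rewrite !all_cat; apply/and3P; split.
- by move: ax => /= /andP[].
- by apply/allP => z hz; apply: locM; move/allP: at_; apply.
apply/allP => z; rewrite mem_rev => /mem_belast hz; by move/allP: ay; apply.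
Qed.
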